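(* Let $q\neq-1$ be real and $n\ge0$. Then $$T_n(x,s,q)=\sum_{k=0}^{\lfloor n/2\rfloor}q^{k^2}\frac{(1+q)\cdots(1+q^{n-1})}{(1+q)\cdots(1+q^{k})\cdot(1+q^{n-k})\cdots(1+q^{n-1})}\,\frac{[n]}{[n-k]}\begin{bmatrix} n-k\\ k\end{bmatrix}s^kx^{n-2k}$$ $$=\sum_{k=0}^{\lfloor (n-1)/2\rfloor}q^{k^2}(1+q^{k+1})\cdots(1+q^{n-k-1})\frac{[n]}{[n-k]}\begin{bmatrix} n-k\\ k\end{bmatrix}s^kx^{n-2k}+[n\equiv 0 \pmod 2]\,q^{(n/2)^2}s^{n/2}.$$
   Context: $T_0=1$, $T_1=x$, $T_n(x,s,q)=(1+q^{n-1})x\,T_{n-1}(x,s,q)+q^{n-1}s\,T_{n-2}(x,s,q)$ for $n\ge2$. Notation: $[m]=1+q+\cdots+q^{m-1}$, $[m]!=[1]\cdots[m]$, $\begin{bmatrix} m\\ j\end{bmatrix}=\frac{[m]!}{[j]![m-j]!}$; empty products equal $1$; $[P]$ is the Iverson bracket ($1$ if $P$ holds, $0$ otherwise). For $n=0$ the term $\frac{[n]}{[n-k]}$ with $k=0$ is read as $1$. *)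

(* Defs.v *)
From mathcomp Require Import all_boot all_order all_algebra.
Set Implicit Arguments. Unset Strict Implicit. Unset Printing Implicit Defensive.
Import Order.TTheory GRing.Theory Num.Theory.
Local Open Scope ring_scope.

Section Defs.
Variable R : realFieldType.

Fixpoint Tpoly (x s q : R) (n : nat) {struct n} : R :=
  match n with
  | 0 => 1
  | 1 => x
  | S (S m as p) => (1 + q ^+ p) * x * Tpoly x s q p + q ^+ p * s * Tpoly x s q m
  end.

Definition qint (q : R) (m : nat) : R := \sum_(i < m) q ^+ i.
Definition qfact (q : R) (m : nat) : R := \prod_(1 <= i < m.+1) qint q i.
Definition qbinom (q : R) (m j : nat) : R :=
  qfact q m / (qfact q j * qfact q (m - j)).
Definition qratio (q : R) (n k : nat) : R :=
  if n == 0%N then 1 else qint q n / qint q (n - k).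
End Defs.

(* Main.v *)
Require Import Defs.
From mathcomp Require Import all_boot all_order all_algebra ring lra zify.
Set Implicit Arguments. Unset Strict Implicit.
Import Order.TTheory GRing.Theory Num.Theory.
Local Open Scope ring_scope.

Definition Gp (R : realFieldType) (q : R) (m : nat) : R :=
  \prod_(1 <= i < m.+1) (1 + q ^+ i).

Lemma qintS (R : realFieldType) (q : R) a : qint q a.+1 = qint q a + q ^+ a.
Proof. by rewrite /qint big_ord_recr. Qed.

Lemma qint0 (R : realFieldType) (q : R) : qint q 0 = 0.
Proof. by rewrite /qint big_ord0. Qed.

Lemma qintE (R : realFieldType) (q : R) a : (1 - q) * qint q a = 1 - q ^+ a.
Proof.
elim: a => [|a IH]; first by rewrite qint0 expr0 mulr0 subrr.
rewrite qintS mulrDr IH exprS; ring.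
Qed.

Lemma qintD (R : realFieldType) (q : R) a b : qint q (a + b) = qint q a + q ^+ a * qint q b.
Proof.
elim: b => [|b IH]; first by rewrite addn0 qint0 mulr0 addr0.
by rewrite addnS !qintS IH exprD; ring.
Qed.

Lemma qint1 (R : realFieldType) a : qint 1 a = a%:R :> R.
Proof. elim: a => [|a IH]; first by rewrite qint0. by rewrite qintS IH expr1n -natr1. Qed.

Lemma absq1 (R : realFieldType) (q : R) i : (0 < i)%N -> `|q| ^+ i = 1 -> q = 1 \/ q = -1.
Proof.
move=> hi h. have : `|q| == 1 by rewrite -(pexpr_eq1 hi) ?normr_ge0 // h.
case: (lerP 0 q) => hq; first by rewrite ger0_norm // => /eqP; left.
by rewrite ltr0_norm // => /eqP h1; right; rewrite -h1 opprK.
Qed.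

Lemma qint_neq0 (R : realFieldType) (q : R) a : q != -1 -> (0 < a)%N -> qint q a != 0.
Proof.
move=> hq ha. have [->|q1] := eqVneq q 1; first by rewrite qint1 pnatr_eq0 -lt0n.
apply/eqP => h0. have := qintE q a. rewrite h0 mulr0 => /eqP; rewrite eq_sym subr_eq0 => /eqP h.
have : `|q| ^+ a = 1 by rewrite -normrX -h normr1.
move/(absq1 ha) => [h1|h1]; [by rewrite h1 eqxx in q1 | by rewrite h1 eqxx in hq].
Qed.

Lemma onep_neq0 (R : realFieldType) (q : R) i : q != -1 -> 1 + q ^+ i != 0.
Proof.
move=> hq. case: i => [|i]; first by rewrite expr0; apply/eqP; lra.
apply/eqP => h0. have h : q ^+ i.+1 = -1 by apply/eqP; rewrite -subr_eq0 opprK addrC h0.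
have h2 : `|q| ^+ i.+1 = 1 by rewrite -normrX h normrN normr1.
have [h1|h1] := absq1 (ltn0Sn i) h2.
  by move: h; rewrite h1 expr1n => ?; lra.
by move: hq; rewrite h1 eqxx.
Qed.

Lemma Gp_neq0 (R : realFieldType) (q : R) m : q != -1 -> Gp q m != 0.
Proof.
move=> hq; rewrite /Gp prodf_seq_neq0; apply/allP => i _ /=; exact: onep_neq0.
Qed.

Lemma qfact_neq0 (R : realFieldType) (q : R) m : q != -1 -> qfact q m != 0.
Proof.
move=> hq; rewrite /qfact prodf_seq_neq0; apply/allP => i; rewrite mem_index_iota => /andP[hi _] /=.
exact: qint_neq0.
Qed.

Lemma GpS (R : realFieldType) (q : R) m : Gp q m.+1 = Gp q m * (1 + q ^+ m.+1).
Proof. by rewrite /Gp big_nat_recr. Qed.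
Lemma qfactS (R : realFieldType) (q : R) m : qfact q m.+1 = qfact q m * qint q m.+1.
Proof. by rewrite /qfact big_nat_recr. Qed.
Lemma Gp0 (R : realFieldType) (q : R) : Gp q 0 = 1.
Proof. by rewrite /Gp big_geq. Qed.

Lemma qfact0 (R : realFieldType) (q : R) : qfact q 0 = 1.
Proof. by rewrite /qfact big_geq. Qed.

Definition Bc (R : realFieldType) (q : R) (n k : nat) : R :=
  if n == 0%N then 1 else
  q ^+ (k ^ 2) * qint q n * Gp q (n - k - 1) * qfact q (n - k - 1)
    / (Gp q k * qfact q k * qfact q (n - 2 * k)).
Definition Cc (R : realFieldType) (q : R) (n k : nat) : R :=
  if (2 * k <= n)%N then Bc q n k else 0.

Lemma Bdiag (R : realFieldType) (q : R) j : q != -1 -> Bc q (2 * j) j = q ^+ (j ^ 2).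
Proof.
move=> hq; case: j => [|j]; first by rewrite /Bc /= expr0.
rewrite /Bc (_ : (2 * j.+1 == 0)%N = false) //.
have -> : (2 * j.+1 - j.+1 - 1 = j)%N by lia.
have -> : (2 * j.+1 - 2 * j.+1 = 0)%N by lia.
have -> : (2 * j.+1 = j.+1 + j.+1)%N by lia.
rewrite qintD GpS qfactS qfact0.
have h1 := Gp_neq0 j hq. have h2 := qfact_neq0 j hq. have h3 := onep_neq0 j.+1 hq.
have h4 := qint_neq0 hq (ltn0Sn j).
field. by rewrite h1 h2 h3 h4.
Qed.

Lemma coreQ (R : realFieldType) (q : R) m k :
  qint q (m + k + k + 3) * (1 + q ^+ (m + k + 1)) * qint q (m + k + 1) =
  (1 + q ^+ (m + k + k + 2)) * qint q (m + k + k + 2) * qint q (m + 1)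
  + q ^+ (m + 1) * qint q (m + k + k + 1) * (1 + q ^+ (k + 1)) * qint q (k + 1).
Proof.
have [->|q1] := eqVneq q 1.
  by rewrite !qint1 !expr1n !natrD; ring.
have hq : (1 - q) ^+ 2 != 0 by rewrite expf_neq0 // subr_eq0 eq_sym.
apply: (mulfI hq).
set a1 := qint q (m + k + k + 3). set a2 := qint q (m + k + 1).
set a3 := qint q (m + k + k + 2). set a4 := qint q (m + 1).
set a5 := qint q (m + k + k + 1). set a6 := qint q (k + 1).
set c1 := (1 + q ^+ (m + k + 1)). set c2 := (1 + q ^+ (m + k + k + 2)).
set c3 := q ^+ (m + 1). set c4 := (1 + q ^+ (k + 1)).
have -> : (1 - q) ^+ 2 * (a1 * c1 * a2) = ((1 - q) * a1) * c1 * ((1 - q) * a2) by ring.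
have -> : (1 - q) ^+ 2 * (c2 * a3 * a4 + c3 * a5 * c4 * a6) =
  c2 * ((1 - q) * a3) * ((1 - q) * a4) + c3 * ((1 - q) * a5) * c4 * ((1 - q) * a6) by ring.
rewrite /a1 /a2 /a3 /a4 /a5 /a6 /c1 /c2 /c3 /c4 !qintE !exprD; ring.
Qed.

Lemma Crec (R : realFieldType) (q x s : R) n k : q != -1 ->
  Cc q n.+2 k.+1 * s ^+ k.+1 * x ^+ (n.+2 - 2 * k.+1) =
  (1 + q ^+ n.+1) * x * (Cc q n.+1 k.+1 * s ^+ k.+1 * x ^+ (n.+1 - 2 * k.+1))
  + q ^+ n.+1 * s * (Cc q n k * s ^+ k * x ^+ (n - 2 * k)).
Proof.
move=> hq.
case: (ltngtP n (2 * k)) => hn.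
- have d1 : (2 * k.+1 <= n.+2)%N = false by lia.
  have d2 : (2 * k.+1 <= n.+1)%N = false by lia.
  have d3 : (2 * k <= n)%N = false by lia.
  by rewrite /Cc d1 d2 d3 !mul0r !mulr0 addr0.
- have [m ->] : exists m, n = (m + k + k + 1)%N by exists (n - 2 * k - 1)%N; lia.
  have c1 : (2 * k.+1 <= (m + k + k + 1).+2)%N by lia.
  have c2 : (2 * k.+1 <= (m + k + k + 1).+1)%N by lia.
  have c3 : (2 * k <= (m + k + k + 1))%N by lia.
  rewrite /Cc c1 c2 c3 /Bc.
  have -> : ((m + k + k + 1).+2 == 0)%N = false by [].
  have -> : ((m + k + k + 1).+1 == 0)%N = false by [].
  have -> : ((m + k + k + 1) == 0)%N = false by lia.
  have -> : ((m + k + k + 1).+2 - k.+1 - 1 = m + k + 1)%N by lia.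
  have -> : ((m + k + k + 1).+2 - 2 * k.+1 = m + 1)%N by lia.
  have -> : ((m + k + k + 1).+1 - k.+1 - 1 = m + k)%N by lia.
  have -> : ((m + k + k + 1).+1 - 2 * k.+1 = m)%N by lia.
  have -> : ((m + k + k + 1) - 2 * k = m + 1)%N by lia.
  have -> : ((m + k + k + 1).+2 = m + k + k + 3)%N by lia.
  have -> : ((m + k + k + 1).+1 = m + k + k + 2)%N by lia.
  have -> : (k.+1 ^ 2 = k ^ 2 + (k + k + 1))%N by lia.
  have -> : (k.+1 = k + 1)%N by lia.
  have -> : Gp q (m + k + 1) = Gp q (m + k) * (1 + q ^+ (m + k + 1)) by rewrite addn1 GpS.
  have -> : qfact q (m + k + 1) = qfact q (m + k) * qint q (m + k + 1) by rewrite addn1 qfactS.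
  have -> : Gp q (k + 1) = Gp q k * (1 + q ^+ (k + 1)) by rewrite addn1 GpS.
  have -> : qfact q (k + 1) = qfact q k * qint q (k + 1) by rewrite addn1 qfactS.
  have -> : qfact q (m + 1) = qfact q m * qint q (m + 1) by rewrite addn1 qfactS.
  have e := coreQ q m k.
  set a1 := qint q (m + k + k + 3). set a2 := qint q (m + k + 1).
  set a3 := qint q (m + k + k + 2). set a4 := qint q (m + 1).
  set a5 := qint q (m + k + k + 1). set a6 := qint q (k + 1).
  set c1' := (1 + q ^+ (m + k + 1)). set c2' := (1 + q ^+ (m + k + k + 2)).
  set c4 := (1 + q ^+ (k + 1)).
  set g := Gp q (m + k). set f := qfact q (m + k). set gk := Gp q k.
  set fk := qfact q k. set fm := qfact q m.
  have hgk : gk != 0 by apply: Gp_neq0.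
  have hfk : fk != 0 by apply: qfact_neq0.
  have hfm : fm != 0 by apply: qfact_neq0.
  have ha4 : a4 != 0 by apply: qint_neq0; rewrite // addn1.
  have ha6 : a6 != 0 by apply: qint_neq0; rewrite // addn1.
  have hc4 : c4 != 0 by apply: onep_neq0.
  set K := q ^+ (k ^ 2) * q ^+ (k + k + 1) * g * f / (gk * c4 * fk * a6 * fm * a4).
  have key : q ^+ (k ^ 2 + (k + k + 1)) * a1 * (g * c1') * (f * a2) /
      (gk * c4 * (fk * a6) * (fm * a4)) =
    c2' * (q ^+ (k ^ 2 + (k + k + 1)) * a3 * g * f / (gk * c4 * (fk * a6) * fm))
    + q ^+ (m + k + k + 2) * (q ^+ (k ^ 2) * a5 * g * f / (gk * fk * (fm * a4))).
    apply/eqP; rewrite -subr_eq0.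
    have -> : q ^+ (k ^ 2 + (k + k + 1)) * a1 * (g * c1') * (f * a2) /
      (gk * c4 * (fk * a6) * (fm * a4)) -
     (c2' * (q ^+ (k ^ 2 + (k + k + 1)) * a3 * g * f / (gk * c4 * (fk * a6) * fm))
      + q ^+ (m + k + k + 2) * (q ^+ (k ^ 2) * a5 * g * f / (gk * fk * (fm * a4))))
      = K * (a1 * c1' * a2 - (c2' * a3 * a4 + q ^+ (m + 1) * a5 * c4 * a6)).
      rewrite /K !exprD; field.
      by rewrite hgk hc4 hfk ha6 hfm ha4.
    by rewrite e subrr mulr0.
  rewrite key (_ : (m + k + k + 2 = (m + 1) + k + k + 1)%N); last by lia.
  rewrite !exprD; ring.
- subst n.
  have d1 : (2 * k.+1 <= (2 * k).+2)%N = true by lia.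
  have d2 : (2 * k.+1 <= (2 * k).+1)%N = false by lia.
  have d3 : (2 * k <= 2 * k)%N = true by lia.
  rewrite /Cc d1 d2 d3.
  have -> : ((2 * k).+2 = 2 * k.+1)%N by lia.
  rewrite !Bdiag // !subnn !expr0.
  have -> : (k.+1 ^ 2 = k ^ 2 + (k + k + 1))%N by lia.
  have -> : ((2 * k).+1 = k + k + 1)%N by lia.
  rewrite !exprD !mul0r mulr0 add0r (exprS s k); ring.
Qed.

Lemma C0rec (R : realFieldType) (q : R) n : q != -1 ->
  Cc q n.+2 0 = (1 + q ^+ n.+1) * Cc q n.+1 0.
Proof.
move=> hq. rewrite /Cc /Bc /=.
have -> : (n.+2 - 0 - 1 = n.+1)%N by lia.
have -> : (n.+1 - 0 - 1 = n)%N by lia.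
have -> : (n.+2 - 2 * 0 = n.+2)%N by lia.
have -> : (n.+1 - 2 * 0 = n.+1)%N by lia.
rewrite expr0 Gp0 qfact0.
rewrite GpS !qfactS.
have h1 := qfact_neq0 n hq. have h2 := qint_neq0 hq (ltn0Sn n).
have h3 := qint_neq0 hq (ltn0Sn n.+1).
set a := qfact q n. set b := qint q n.+1. set c := qint q n.+2.
field. by rewrite h1 h2 h3.
Qed.

Lemma Tsum (R : realFieldType) (q x s : R) n N : q != -1 -> (n < 2 * N)%N ->
  Tpoly x s q n = \sum_(0 <= k < N) Cc q n k * s ^+ k * x ^+ (n - 2 * k).
Proof.
move=> hq.
suff H : forall n, (forall N, (n < 2 * N)%N ->
  Tpoly x s q n = \sum_(0 <= k < N) Cc q n k * s ^+ k * x ^+ (n - 2 * k)) /\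
  (forall N, (n.+1 < 2 * N)%N ->
  Tpoly x s q n.+1 = \sum_(0 <= k < N) Cc q n.+1 k * s ^+ k * x ^+ (n.+1 - 2 * k)).
  by move: (H n) => [H1 _]; apply: H1.
clear n N.
elim => [|n [IH0 IH1]].
  split=> -[|M] hM //; rewrite big_nat_recl // big1 ?addr0.
  - by rewrite /Cc /Bc /= !expr0 !mulr1.
  - move=> k _; have d : (2 * k.+1 <= 0)%N = false by lia.
    by rewrite /Cc d !mul0r.
  - rewrite /Cc /Bc /=.
    have -> : (1 - 0 - 1 = 0)%N by lia.
    have -> : (1 - 2 * 0 = 1)%N by lia.
    rewrite expr0 !mulr1 Gp0 qfact0 qintS qint0 expr0 add0r.
    rewrite (qfactS q 0) qfact0 qintS qint0 expr0 add0r.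
    by rewrite expr1; field.
  - move=> k _; have d : (2 * k.+1 <= 1)%N = false by lia.
    by rewrite /Cc d !mul0r.
split; first exact: IH1.
move=> -[|M] hM; first by [].
have -> : Tpoly x s q n.+2 = (1 + q ^+ n.+1) * x * Tpoly x s q n.+1
   + q ^+ n.+1 * s * Tpoly x s q n by [].
rewrite (IH1 M.+1) ?(IH0 M); try lia.
symmetry; rewrite !big_nat_recl //.
under eq_bigr do rewrite Crec //.
rewrite big_split /= -!mulr_sumr C0rec //.
have -> : (n.+2 - 2 * 0 = n.+2)%N by lia.
have -> : (n.+1 - 2 * 0 = n.+1)%N by lia.
rewrite (exprS x n.+1).
ring.
Qed.

Lemma term1 (R : realFieldType) (q : R) n k : q != -1 -> (2 * k <= n)%N ->
  q ^+ (k ^ 2)%N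
      * ((\prod_(1 <= i < n) (1 + q ^+ i))
         / ((\prod_(1 <= i < k.+1) (1 + q ^+ i))
            * (\prod_(n - k <= i < n) (1 + q ^+ i))))
      * qratio q n k * qbinom q (n - k) k = Bc q n k.
Proof.
move=> hq hk.
case: n hk => [|n] hk.
  have -> : k = 0%N by lia.
  by rewrite /Bc /qratio /qbinom /= !big_geq // qfact0 expr0; field.
have [j ->] : exists j, n = (j + k)%N by exists (n - k)%N; lia.
rewrite /qratio /qbinom /Bc /=.
have -> : ((j + k).+1 - k - 1 = j)%N by lia.
have -> : ((j + k).+1 - k = j.+1)%N by lia.
have -> : (j.+1 - k = (j + k).+1 - 2 * k)%N by lia.
set r := ((j + k).+1 - 2 * k)%N.
rewrite (@big_cat_nat _ _ _ j.+1) //=; last by lia.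
rewrite -/(Gp q j) -/(Gp q k) qfactS.
set P := \prod_(j.+1 <= i < (j + k).+1) (1 + q ^+ i).
have hP : P != 0 by rewrite prodf_seq_neq0; apply/allP => i _ /=; exact: onep_neq0.
have h1 := Gp_neq0 j hq. have h2 := Gp_neq0 k hq. have h3 := qfact_neq0 k hq.
have h4 := qfact_neq0 r hq. have h5 := qint_neq0 hq (ltn0Sn j). have h6 := qfact_neq0 j hq.
field. by rewrite hP h2 h3 h4 h5.
Qed.

Lemma term2 (R : realFieldType) (q : R) n k : q != -1 -> (2 * k < n)%N ->
  q ^+ (k ^ 2)%N * (\prod_(k.+1 <= i < n - k) (1 + q ^+ i))
      * qratio q n k * qbinom q (n - k) k = Bc q n k.
Proof.
move=> hq hk.
have [j ->] : exists j, n = (j + k + k).+1 by exists (n - 2 * k).-1; lia.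
rewrite /qratio /qbinom /Bc /=.
have -> : ((j + k + k).+1 - k - 1 = j + k)%N by lia.
have -> : ((j + k + k).+1 - k = (j + k).+1)%N by lia.
have -> : ((j + k).+1 - k = j.+1)%N by lia.
have -> : ((j + k + k).+1 - 2 * k = j.+1)%N by lia.
rewrite /Gp (@big_cat_nat _ _ _ k.+1 1 (j + k).+1) //=; last by lia.
rewrite -/(Gp q k) qfactS.
set P := \prod_(k.+1 <= i < (j + k).+1) (1 + q ^+ i).
have h2 := Gp_neq0 k hq. have h3 := qfact_neq0 k hq.
have h4 := qfact_neq0 j.+1 hq. have h5 := qint_neq0 hq (ltn0Sn (j + k)). have h6 := qfact_neq0 (j + k) hq.
field. by rewrite h2 h3 h4 h5.
Qed.
Lemma halfs n : (n < 2 * (n./2).+1)%N /\ (if odd n then (n.+1)./2 = (n./2).+1 else (n.+1)./2 = n./2 /\ n = 2 * n./2)%N.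
Proof.
have h1 := odd_double_half n. have h2 := odd_double_half n.+1. rewrite /= in h2.
case: (odd n) h1 h2 => /= h1 h2; rewrite -!muln2 in h1 h2; lia.
Qed.

Theorem theorem2p5 (R : realFieldType) (q x s : R) (n : nat) (hq : q != -1) :
  Tpoly x s q n =
    \sum_(0 <= k < (n./2).+1)
      q ^+ (k ^ 2)%N
      * ((\prod_(1 <= i < n) (1 + q ^+ i))
         / ((\prod_(1 <= i < k.+1) (1 + q ^+ i))
            * (\prod_(n - k <= i < n) (1 + q ^+ i))))
      * qratio q n k * qbinom q (n - k) k * s ^+ k * x ^+ (n - 2 * k)
  /\
  Tpoly x s q n =
    \sum_(0 <= k < (n.+1)./2)
      q ^+ (k ^ 2)%N * (\prod_(k.+1 <= i < n - k) (1 + q ^+ i))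
      * qratio q n k * qbinom q (n - k) k * s ^+ k * x ^+ (n - 2 * k)
    + (if ~~ odd n then q ^+ ((n./2) ^ 2)%N * s ^+ (n./2) else 0).
Proof.
have [hb hodd] := halfs n.
have hh := odd_double_half n. rewrite -muln2 in hh.
have T1 : Tpoly x s q n = \sum_(0 <= k < (n./2).+1) Bc q n k * s ^+ k * x ^+ (n - 2 * k).
  rewrite (Tsum x s hq hb). apply: eq_big_nat => k /andP[_ hk].
  have hk' : (2 * k <= n)%N by lia.
  by rewrite /Cc hk'.
split.
  rewrite T1; apply: eq_big_nat => k /andP[_ hk].
  by rewrite -(term1 hq) //; lia.
rewrite T1.
case: (odd n) hodd hh => hodd hh.
  rewrite hodd /= addr0; apply: eq_big_nat => k /andP[_ hk].
  by rewrite -(term2 hq) //; lia.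
case: hodd => hodd hn.
rewrite hodd /= big_nat_recr //=.
congr (_ + _).
  apply: eq_big_nat => k /andP[_ hk].
  by rewrite -(term2 hq) //; lia.
have -> : Bc q n n./2 = q ^+ (n./2 ^ 2) by rewrite {1}hn Bdiag.
have -> : (n - 2 * n./2 = 0)%N by lia.
by rewrite expr0 mulr1.
Qed.
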